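(* Let $q\equiv 1\pmod 6$ be a prime power, let $\rho$ be a primitive element of $\mathbb F_q$, and let $\pi:(\mathbb Z_2^2)^*\to\mathbb Z_3$ be a bijection. Suppose $c=c^3_q(1,2)$ is odd and $l=(c+1)/2$. Then $\Gamma=\operatorname{Cay}(G_{l,2,q},S(\pi))$ is not strongly regular.
   Context: For an additive group $A$, $A^*=A\setminus\{0\}$. $G_{l,2,q}=\mathbb Z_l\oplus\mathbb Z_2^2\oplus\mathbb F_q$. $S_0=\{(g,0): g\in(\mathbb Z_l\oplus\mathbb Z_2^2)^*\}$; for $z\in(\mathbb Z_2^2)^*$, $S_{z,\pi}=\{(0,z,\rho^j): j\in\mathbb Z,\ j\equiv\pi(z)\pmod 3\}$; $S(\pi)=S_0\cup\bigcup_z S_{z,\pi}$; $\operatorname{Cay}(G_{l,2,q},S(\pi))$ has vertex set $G_{l,2,q}$ with $x\sim y$ iff $y-x\in S(\pi)$. Write $q=6r+1$; $C^3_q(i)=\{\rho^{3j+i}:0\le j\le 2r-1\}$ for $i\in\mathbb Z_3$, $c^3_q(a,b)=|(C^3_q(a)+1)\cap C^3_q(b)|$. A graph is strongly regular if it is non-empty, regular, every two adjacent vertices have a constant number $\lambda$ of common neighbours, and every two distinct non-adjacent vertices have a constant number $\mu$ of common neighbours. *)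

(* Defs.v *)
From HB Require Import structures.
From mathcomp Require Import all_boot all_order all_algebra.
From mathcomp Require Import boolp.
Set Implicit Arguments. Unset Strict Implicit. Unset Printing Implicit Defensive.
Import Order.TTheory GRing.Theory Num.Theory.
Local Open Scope ring_scope.

(* Z_l for l >= 1, represented as 'I_(l.-1).+1 (the integers mod l, with its
   canonical additive group structure); for l >= 1 this has exactly l elements.
   (MathComp's 'Z_l is not used because 'Z_1 denotes Z/2.) *)
Notation Zl l := 'I_(l.-1).+1.

Notation Z22 := ('Z_2 * 'Z_2)%type.

Notation Gl2q l F := ((Zl l * Z22) * (F : finFieldType))%type.

Definition S0 (l : nat) (F : finFieldType) : {set Gl2q l F} :=
  [set x : Gl2q l F | (x.2 == 0) && (x.1 != 0)].

Definition Szpi (l : nat) (F : finFieldType) (rho : F) (pi : Z22 -> 'Z_3)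
    (z : Z22) : {set Gl2q l F} :=
  [set x : Gl2q l F | [&& x.1.1 == 0, x.1.2 == z &
     `[< exists j : int, ((j %% 3)%Z = (pi z : nat)%:Z) /\ x.2 = rho ^ j >] ]].

Definition Spi (l : nat) (F : finFieldType) (rho : F) (pi : Z22 -> 'Z_3)
    : {set Gl2q l F} :=
  S0 l F :|: \bigcup_(z in [set z : Z22 | z != 0]) Szpi l rho pi z.

Definition cay_adj (G : zmodType) (S : {pred G}) : rel G :=
  fun x y => (y - x) \in S.

Definition strongly_regular (V : finType) (adj : rel V) : Prop :=
  [/\ exists x y, adj x y,
      exists k : nat, forall x, #|[set y | adj x y]| = k,
      exists lam : nat, forall x y, adj x y ->
          #|[set w | adj x w && adj y w]| = lam &
      exists mu : nat, forall x y, x != y -> ~~ adj x y ->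
          #|[set w | adj x w && adj y w]| = mu].

(* Cyclotomic classes of order 3: q = 6r+1, C^3_q(i) = {rho^(3j+i) : 0 <= j <= 2r-1} *)
Definition cyc3 (F : finFieldType) (rho : F) (i : nat) : {set F} :=
  [set rho ^+ (3 * j + i) | j : 'I_(2 * ((#|F| - 1) %/ 6))].

Definition cyc3num (F : finFieldType) (rho : F) (a b : nat) : nat :=
  #|[set y : F | (y - 1 \in cyc3 rho a) && (y \in cyc3 rho b)]|.

Definition Gamma (l : nat) (F : finFieldType) (rho : F) (pi : Z22 -> 'Z_3)
    : rel (Gl2q l F) :=
  @cay_adj (Gl2q l F) (fun x => x \in Spi l rho pi).

(* Main.v *)
Require Import Defs.
From HB Require Import structures.
From mathcomp Require Import all_boot all_order all_algebra zify.
From mathcomp Require Import boolp.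
Import Order.TTheory GRing.Theory Num.Theory.
Local Open Scope ring_scope.

Lemma Z2N (u : 'Z_2) : - u = u.
Proof. case: u => [[|[|m]] Hm]; apply/val_inj => //=. Qed.

Lemma Z22N (u : Z22) : - u = u.
Proof. case: u => a b. rewrite (_ : - (a, b) = (- a, - b)) //. by rewrite !Z2N. Qed.

Lemma rho1 (F : finFieldType) (rho : F) (n : nat) (j : int) :
  n.-primitive_root rho -> (3 %| n)%N -> rho ^ j = 1 -> (j %% 3)%Z = 0.
Proof.
move=> pr d3 e.
have key : forall m : nat, rho ^+ m = 1 -> (3 %| m)%N.
  move=> m em; apply: dvdn_trans d3 _; by rewrite (prim_order_dvd pr) em.
case: j e => m e.
  have /key := e; rewrite -exprnP in e; move/key: e => h _.
  lia.
have : rho ^+ m.+1 = 1.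
  by move: e; rewrite NegzE -exprnN => /eqP; rewrite invr_eq1 => /eqP.
move/key => h; rewrite NegzE; lia.
Qed.

Lemma inv_even (T : finType) (f : T -> T) (A : {set T}) :
  involutive f -> (forall x, x \in A -> f x \in A) ->
  (forall x, x \in A -> f x != x) -> ~~ odd #|A|.
Proof.
move=> finv; have [n] := ubnP #|A|; elim: n A => // n IH A ltA clA nfA.
have [->|[x xA]] := set_0Vmem A; first by rewrite cards0.
set B := A :\ x :\ f x.
have fxA : f x \in A :\ x by rewrite !inE nfA // clA.
have cA : #|A| = #|B|.+2 by rewrite (cardsD1 x A) xA (cardsD1 (f x) (A :\ x)) fxA.
rewrite cA /= negbK; apply: IH.
- by move: ltA; rewrite cA; lia.
- move=> y; rewrite !inE => /and3P [yfx yx yA]; rewrite clA // andbT; apply/andP; split.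
    by apply: contra yx => /eqP /(can_inj finv) ->.
  by apply: contra yfx => /eqP <-; rewrite finv.
- by move=> y; rewrite !inE => /and3P [_ _ /nfA].
Qed.

Theorem corollary4p4 (F : finFieldType) (rho : F) (pi : Z22 -> 'Z_3) (l : nat) :
  (#|F| %% 6 = 1)%N ->
  (#|F| - 1).-primitive_root rho ->
  {in [set z : Z22 | z != 0] &, injective pi} ->
  pi @: [set z : Z22 | z != 0] = [set: 'Z_3] ->
  odd (cyc3num rho 1 2) ->
  l = ((cyc3num rho 1 2 + 1) %/ 2)%N ->
  ~ strongly_regular (@Gamma l F rho pi).
Proof.
move=> q6 pr pinj pisurj _ _.
set n := (#|F| - 1)%N in pr.
have Fgt1 : (1 < #|F|)%N.
  by apply/card_gt1P; exists 0, 1; rewrite !inE eq_sym oner_neq0.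
have n6 : (6 %| n)%N by rewrite /n; lia.
set h := (n %/ 2)%N.
have hpos : (0 < h < n)%N by rewrite /h /n; lia.
have rhoh : rho ^+ h = -1.
  have /eqP : (rho ^+ h) ^+ 2 = 1.
    by rewrite -exprM (_ : (h * 2 = n)%N) ?(prim_expr_order pr) // /h; lia.
  case/andP: hpos => h0 hn.
  by rewrite sqrf_eq1 -(prim_order_dvd pr) gtnNdvd //= => /eqP.
have m1n1 : (-1 : F) != 1.
  apply: contraTneq hpos => e; rewrite -rhoh in e.
  apply/negP; case/andP=> h0 hn; have := prim_order_dvd pr h; rewrite -e eqxx gtnNdvd //.
have rho0 : rho != 0.
  apply/eqP => r0; move: (prim_expr_order pr); rewrite r0 expr0n.
  case/andP: hpos => h0 hn; rewrite (_ : n == 0%N = false); last by lia.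
  by move/eqP; rewrite eq_sym oner_eq0.
have n3 : (3 %| n)%N by apply: dvdn_trans n6.
set S := Spi l rho pi.
have symS : forall s, s \in S -> - s \in S.
  move=> s; rewrite /S /Spi !in_setU => /orP [|/bigcupP [z zA sz]].
    rewrite !inE => /andP [s2 s1]; apply/orP; left; rewrite ?inE.
    by rewrite (_ : (-s).2 = - s.2) // (_ : (-s).1 = - s.1) // (eqP s2) oppr0 eqxx oppr_eq0 s1.
  apply/orP; right; apply/bigcupP; exists z => //.
  move: sz; rewrite !inE => /and3P [a b /asboolP [j [jm e]]].
  apply/and3P; split.
  - by rewrite (_ : (-s).1.1 = - s.1.1) // (eqP a) oppr0.
  - by rewrite (_ : (-s).1.2 = - s.1.2) // Z22N.
  apply/asboolP; exists (j + h%:Z); split.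
    by move: jm; rewrite /h; lia.
  by rewrite expfzDr // -exprnP rhoh mulrN1 -e.
have adjE : forall x y, @Gamma l F rho pi x y = (y - x \in S) by [].
have inS1 : forall w : Gl2q l F, w \in S -> w.2 != 0 ->
    exists z, [/\ z != 0, w.1.1 = 0, w.1.2 = z &
       exists j : int, ((j %% 3)%Z = (pi z : nat)%:Z) /\ w.2 = rho ^ j].
  move=> w; rewrite /S /Spi in_setU => /orP [|/bigcupP [z zA]].
    by rewrite inE => /andP [/eqP -> _]; rewrite eqxx.
  rewrite !inE => /and3P [/eqP a /eqP b /asboolP c] _.
  by exists z; split => //; move: zA; rewrite inE.
case => _ _ _ [mu Hmu].
have : (1 : 'Z_3) \in pi @: [set z : Z22 | z != 0] by rewrite pisurj inE.
case/imsetP => b; rewrite inE => bA eb.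
have : (0 : 'Z_3) \in pi @: [set z : Z22 | z != 0] by rewrite pisurj inE.
case/imsetP => z0; rewrite inE => z0A e0.
set W := fun d : Gl2q l F => [set w | @Gamma l F rho pi 0 w && @Gamma l F rho pi d w].
have invf : forall d : Gl2q l F, involutive (fun w => d - w).
  by move=> d w; rewrite opprB addrC subrK.
have closW : forall d w, w \in W d -> d - w \in W d.
  move=> d w; rewrite !inE !adjE !subr0 => /andP [w0 wd].
  rewrite (_ : d - w - d = - w); last by rewrite addrAC subrr add0r.
  by rewrite -[d - w]opprB !symS.
have two0 : (1 + 1 : F) != 0 by rewrite addr_eq0 eq_sym.
pose dD : Gl2q l F := ((0, b), 1).
have evD : ~~ odd #|W dD|.
  apply: (@inv_even _ _ _ (invf dD)); first exact: closW.
  move=> w _; apply/eqP => e; have := congr1 (fun u : Gl2q l F => u.1.2) e.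
  change (b - w.1.2 = w.1.2 -> False); rewrite Z22N -[RHS]add0r => /addIr bz.
  by rewrite bz eqxx in bA.
have nD : ~~ @Gamma l F rho pi 0 dD.
  rewrite adjE subr0; apply/negP => /inS1 [] /=; first by rewrite oner_eq0.
  move=> z [_ _ zb [j [jm e]]].
  have := @rho1 _ _ _ _ pr n3 (esym e); rewrite jm -zb -eb /=. by [].
have neD : (0 : Gl2q l F) != dD.
  apply/eqP => e; have := congr1 (fun u : Gl2q l F => u.2) e => /= /eqP.
  by rewrite eq_sym oner_eq0.
pose dE : Gl2q l F := ((0, 0), 1 + 1).
pose w0 : Gl2q l F := ((0, z0), 1).
have nE : ~~ @Gamma l F rho pi 0 dE.
  rewrite adjE subr0; apply/negP => /inS1 [] //=.
  by move=> z [zA _ z0' _]; rewrite -z0' eqxx in zA.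
have neE : (0 : Gl2q l F) != dE.
  apply/eqP => e; have := congr1 (fun u : Gl2q l F => u.2) e => /= /eqP.
  by rewrite eq_sym (negbTE two0).
have fixw0 : dE - w0 = w0.
  change (((0 - 0, 0 - z0), (1 + 1) - 1) = w0 :> Gl2q l F).
  by rewrite subr0 sub0r Z22N addrK.
have g0w0 : @Gamma l F rho pi 0 w0.
  rewrite adjE subr0 /S /Spi in_setU; apply/orP; right; apply/bigcupP; exists z0.
    by rewrite inE.
  rewrite !inE /= !eqxx /=; apply/asboolP; exists 0; split; last by rewrite expr0z.
  by rewrite -e0.
have gEw0 : @Gamma l F rho pi dE w0.
  by rewrite adjE -opprB fixw0 symS //; rewrite adjE subr0 in g0w0.
have fixE : W dE :&: [set w : Gl2q l F | dE - w == w] = [set w0].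
  apply/setP => w; rewrite !inE; apply/idP/idP; last first.
    by move/eqP ->; rewrite g0w0 gEw0 fixw0 eqxx.
  case/andP => [/andP [g0 gd] /eqP fx].
  have w2 : w.2 = 1.
    have fx2 := congr1 (fun u : Gl2q l F => u.2) fx.
    change ((1 + 1) - w.2 = w.2) in fx2.
    have : w.2 + w.2 = 1 + 1 by rewrite -{1}fx2 subrK.
    rewrite -[in X in X = _](mulr1 w.2) -mulrDr -[in X in _ = X](mul1r (1 + 1)).
    by move/(mulIf two0).
  rewrite adjE subr0 in g0.
  have w2n : w.2 != 0 by rewrite w2 oner_eq0.
  have [z [zA a zz [j [jm e]]]] := inS1 w g0 w2n.
  have pz : pi z = pi z0.
    apply/val_inj; rewrite /= -e0 /=.
    by have := @rho1 _ _ _ _ pr n3 (esym (etrans (esym w2) e)); rewrite jm; case.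
  have zz0 : z = z0 by apply: pinj; rewrite ?inE.
  by case: w fx g0 gd w2 a zz w2n {e} => [[a' zw] x] /= _ _ _ -> -> -> _; rewrite zz0.
have odE : odd #|W dE|.
  rewrite -(cardsID [set w : Gl2q l F | dE - w == w] (W dE)) fixE cards1 /= add0n.
  apply: (@inv_even _ _ _ (invf dE)).
    move=> w; rewrite !inE => /andP [fw ww]; rewrite invf eq_sym fw /=.
    by have := closW dE w; rewrite !inE; apply.
  by move=> w; rewrite !inE => /andP [].
have := Hmu 0 dD neD nD; have := Hmu 0 dE neE nE.
rewrite -/(W dD) -/(W dE) => h1 h2.
by move: odE evD; rewrite h1 h2 => ->.
Qed.
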